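(* Let $R\ge1$, $\Gamma\ge1$, $1\le s\le n_2$, $\gamma>0$, $c\ge1$. Let $\hat X=\sum_{r=1}^R\hat u^r(\hat v^r)^T$ have rank $R$, with $\|\hat v^r\|_1\le\sqrt s\|\hat v^r\|_2$ for all $r$ and $\sum_r\|\hat u^r\|_2^2\|\hat v^r\|_2^2\le\Gamma^2$, and let $c_{\hat U}>0$ satisfy $\sum_{r=1}^R(\|\hat u^r\|_2\|\hat v^r\|_2)^{2/3}\le c_{\hat U}R^{2/3}\|\hat X\|_{2/3}^{2/3}$. Let $\eta\in\mathbb{R}^m\setminus\{0\}$, $y=\mathcal{A}(\hat X)+\eta$, and set $\alpha=\beta=\|\eta\|_2^2/\|\hat X\|_{2/3}^{2/3}$, assumed $<1$. Assume $\mathcal{A}$ has the additive rank-$2R$ effectively $\big(n_1,\max\{s,\gamma^2(\|\hat X\|_{2/3}^{2/3}/\|\eta\|_2^2)^2\}\big)$-sparse RIP$_{(c+1)\Gamma}$ with constant $0<\delta<1$. Then for any global minimizer $(u^1_{\alpha,\beta},\dots,v^R_{\alpha,\beta})$ of $J^R_{\alpha,\beta}$ with $\|\sigma_{\alpha,\beta}\|_2\le c\Gamma$ (where $(\sigma_{\alpha,\beta})_r=\|u^r_{\alpha,\beta}\|_2\|v^r_{\alpha,\beta}\|_2$) and $\|v^r_{\alpha,\beta}\|_2\ge(\|\hat X\|_F+\|\eta\|_2+\sqrt\delta)^2/\gamma$ for all $r\in[R]$, $$\|\hat X-X_{\alpha,\beta}\|_F\le\left(2\sqrt{c_{\hat U}R^{2/3}s^{1/3}}+2\right)\|\eta\|_2+\sqrt\delta,$$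 where $X_{\alpha,\beta}=\sum_{r=1}^Ru^r_{\alpha,\beta}(v^r_{\alpha,\beta})^T$.
   Context: $J^R_{\alpha,\beta}(u^1,\dots,u^R,v^1,\dots,v^R)=\|y-\mathcal{A}(\sum_{r=1}^Ru^r(v^r)^T)\|_2^2+\alpha\sum_r\|u^r\|_2^2+\beta\sum_r\|v^r\|_1$, with $\mathcal{A}:\mathbb{R}^{n_1\times n_2}\to\mathbb{R}^m$ linear. $\|Z\|_p$ is the Schatten-$p$ (quasi-)norm (the $\ell_p$ quasi-norm of the singular values). For $n\ge1,s>0$: $K_{n,s}=\{z\in\mathbb{R}^n:\|z\|_2\le1,\|z\|_1\le\sqrt s\}$. $K^{R,\Gamma}_{s_1,s_2}$ is the set of $Z=\sum_{r=1}^R\sigma_ru^r(v^r)^T$ with $u^r\in K_{n_1,s_1}$, $v^r\in K_{n_2,s_2}$, $\|u^r\|_2=\|v^r\|_2=1$, $\|\sigma\|_2\le\Gamma$. $\mathcal{A}$ has the additive rank-$R$ effectively $(s_1,s_2)$-sparse RIP$_\Gamma$ with constant $\delta$ if $|\|\mathcal{A}(Z)\|_2^2-\|Z\|_F^2|\le\delta$ for all $Z\in K^{R,\Gamma}_{s_1,s_2}$. *)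

(* Defs.v *)
(* Vectors in R^n are functions nat -> R
   (only indices < n matter); n1 x n2 matrices are nat -> nat -> R
   (only indices i < n1, j < n2 matter).  Families (u^1..u^R) are
   nat -> (nat -> R), indexed by r < R (0-based). *)
From Stdlib Require Import Reals ClassicalEpsilon.
Open Scope R_scope.

Fixpoint rsum (n : nat) (f : nat -> R) : R :=
  match n with O => 0 | S k => rsum k f + f k end.

(* nonnegative real power x^p, with the convention 0^p = 0 (p > 0) *)
Definition rpow (x p : R) : R :=
  if Rle_dec x 0 then 0 else Rpower x p.

Definition norm2 (n : nat) (v : nat -> R) : R := sqrt (rsum n (fun i => v i ^ 2)).
Definition norm1 (n : nat) (v : nat -> R) : R := rsum n (fun i => Rabs (v i)).

Definition frob (n1 n2 : nat) (Z : nat -> nat -> R) : R :=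
  sqrt (rsum n1 (fun i => rsum n2 (fun j => Z i j ^ 2))).

Definition mat_eq (n1 n2 : nat) (Z W : nat -> nat -> R) : Prop :=
  forall i j, (i < n1)%nat -> (j < n2)%nat -> Z i j = W i j.

Definition wsum_outer (K : nat) (sig : nat -> R) (U V : nat -> nat -> R)
  : nat -> nat -> R :=
  fun i j => rsum K (fun r => sig r * U r i * V r j).

Definition sum_outer (K : nat) (U V : nat -> nat -> R) : nat -> nat -> R :=
  fun i j => rsum K (fun r => U r i * V r j).

Definition has_rank (n1 n2 : nat) (Z : nat -> nat -> R) (k : nat) : Prop :=
  (exists U V, mat_eq n1 n2 Z (sum_outer k U V)) /\
  (forall j U V, mat_eq n1 n2 Z (sum_outer j U V) -> (k <= j)%nat).

Definition orthonormal (n k : nat) (P : nat -> nat -> R) : Prop :=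
  forall a b, (a < k)%nat -> (b < k)%nat ->
    rsum n (fun i => P a i * P b i) = if Nat.eqb a b then 1 else 0.

Definition is_svd (n1 n2 : nat) (Z : nat -> nat -> R)
  (k : nat) (sig : nat -> R) (P Q : nat -> nat -> R) : Prop :=
  (forall i, (i < k)%nat -> 0 < sig i) /\
  orthonormal n1 k P /\ orthonormal n2 k Q /\
  mat_eq n1 n2 Z (wsum_outer k sig P Q).

(* ||Z||_p^p = sum of p-th powers of the singular values of Z
   (Schatten-p quasi-norm to the power p).  Well defined since an SVD
   exists and singular values are unique. *)
Definition schatten_pow (p : R) (n1 n2 : nat) (Z : nat -> nat -> R) : R :=
  epsilon (inhabits 0) (fun s => exists k sig P Q,
    is_svd n1 n2 Z k sig P Q /\ s = rsum k (fun i => rpow (sig i) p)).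

(* linear map A : R^{n1 x n2} -> R^m given by its coefficients:
   A(Z)_k = sum_{i<n1, j<n2} a k i j * Z i j  (every linear map has this form) *)
Definition applyA (n1 n2 : nat) (a : nat -> nat -> nat -> R)
  (Z : nat -> nat -> R) : nat -> R :=
  fun k => rsum n1 (fun i => rsum n2 (fun j => a k i j * Z i j)).

Definition inK (n : nat) (s : R) (z : nat -> R) : Prop :=
  norm2 n z <= 1 /\ norm1 n z <= sqrt s.

Definition inKR (n1 n2 Rk : nat) (Gam s1 s2 : R) (Z : nat -> nat -> R) : Prop :=
  exists (sig : nat -> R) (U V : nat -> nat -> R),
    (forall r, (r < Rk)%nat ->
       inK n1 s1 (U r) /\ inK n2 s2 (V r) /\
       norm2 n1 (U r) = 1 /\ norm2 n2 (V r) = 1) /\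
    norm2 Rk sig <= Gam /\
    mat_eq n1 n2 Z (wsum_outer Rk sig U V).

Definition sparse_RIP (m n1 n2 : nat) (a : nat -> nat -> nat -> R)
  (Rk : nat) (s1 s2 Gam delta : R) : Prop :=
  forall Z, inKR n1 n2 Rk Gam s1 s2 Z ->
    Rabs (norm2 m (applyA n1 n2 a Z) ^ 2 - frob n1 n2 Z ^ 2) <= delta.

Definition mat_sub (Z W : nat -> nat -> R) : nat -> nat -> R :=
  fun i j => Z i j - W i j.

Definition Jfun (m n1 n2 : nat) (a : nat -> nat -> nat -> R) (y : nat -> R)
  (alpha beta : R) (Rk : nat) (U V : nat -> nat -> R) : R :=
  norm2 m (fun k => y k - applyA n1 n2 a (sum_outer Rk U V) k) ^ 2
  + alpha * rsum Rk (fun r => norm2 n1 (U r) ^ 2)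
  + beta * rsum Rk (fun r => norm1 n2 (V r)).

(* Main.v *)
Require Import Defs.
From Stdlib Require Import Reals Lra Lia Psatz.
Open Scope R_scope.

Lemma rsum_ext n f g : (forall i, (i<n)%nat -> f i = g i) -> rsum n f = rsum n g.
Proof. induction n; simpl; intros H; auto. rewrite IHn by (intros; apply H; lia). rewrite H by lia. auto. Qed.
Lemma rsum_plus n f g : rsum n (fun i => f i + g i) = rsum n f + rsum n g.
Proof. induction n; simpl; [lra|]. rewrite IHn; ring. Qed.
Lemma rsum_scal n c f : rsum n (fun i => c * f i) = c * rsum n f.
Proof. induction n; simpl; [lra|]. rewrite IHn; ring. Qed.
Lemma rsum_minus n f g : rsum n (fun i => f i - g i) = rsum n f - rsum n g.
Proof. induction n; simpl; [lra|]. rewrite IHn; ring. Qed.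
Lemma rsum_le n f g : (forall i, (i<n)%nat -> f i <= g i) -> rsum n f <= rsum n g.
Proof. induction n; simpl; intros H; [lra|]. assert (f n <= g n) by (apply H; lia).
  assert (rsum n f <= rsum n g) by (apply IHn; intros; apply H; lia). lra. Qed.
Lemma rsum_zero n : rsum n (fun _ => 0) = 0.
Proof. induction n; simpl; lra. Qed.
Lemma rsum_nonneg n f : (forall i, (i<n)%nat -> 0 <= f i) -> 0 <= rsum n f.
Proof. intros H. rewrite <- (rsum_zero n). apply rsum_le; auto. Qed.
Lemma rsum_term_le n f k : (forall i, (i<n)%nat -> 0 <= f i) -> (k<n)%nat -> f k <= rsum n f.
Proof. induction n; simpl; intros H Hk; [lia|].
  assert (0 <= rsum n f) by (apply rsum_nonneg; intros; apply H; lia).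
  destruct (Nat.eq_dec k n). subst; lra.
  assert (f k <= rsum n f) by (apply IHn; [intros; apply H; lia|lia]).
  assert (0 <= f n) by (apply H; lia). lra. Qed.
Lemma rsum_eq0 n f : (forall i, (i<n)%nat -> 0 <= f i) -> rsum n f <= 0 -> forall i, (i<n)%nat -> f i = 0.
Proof. intros H Hs i Hi. pose proof (rsum_term_le n f i H Hi). pose proof (H i Hi). lra. Qed.
Lemma rsum_app n k f : rsum (n+k) f = rsum n f + rsum k (fun i => f (n+i)%nat).
Proof. induction k; simpl. rewrite Nat.add_0_r; ring. rewrite Nat.add_succ_r. simpl. rewrite IHk. ring. Qed.
Lemma rsum_swap n k f : rsum n (fun i => rsum k (fun j => f i j)) = rsum k (fun j => rsum n (fun i => f i j)).
Proof. induction n; simpl. rewrite rsum_zero; auto. rewrite IHn, <- rsum_plus. auto. Qed.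
Lemma rsum_const1 n : rsum n (fun _ => 1) = INR n.
Proof. induction n; cbn [rsum]; auto. rewrite IHn, S_INR; auto. Qed.

Lemma sq_le (x y : R) : 0 <= y -> x^2 <= y^2 -> x <= y.
Proof. intros. nra. Qed.

Lemma norm2_nonneg n f : 0 <= norm2 n f.
Proof. apply sqrt_pos. Qed.
Lemma sumsq_nonneg n f : 0 <= rsum n (fun i => f i ^2).
Proof. apply rsum_nonneg; intros; apply pow2_ge_0. Qed.
Lemma norm2_sq n f : norm2 n f ^2 = rsum n (fun i => f i ^2).
Proof. unfold norm2. apply pow2_sqrt, sumsq_nonneg. Qed.
Lemma norm1_nonneg n f : 0 <= norm1 n f.
Proof. apply rsum_nonneg; intros; apply Rabs_pos. Qed.
Lemma norm2_ext n f g : (forall i, (i<n)%nat -> f i = g i) -> norm2 n f = norm2 n g.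
Proof. intros H; unfold norm2; f_equal; apply rsum_ext; intros; rewrite H; auto. Qed.

Lemma CS n f g : rsum n (fun i => f i * g i) ^2 <= rsum n (fun i => f i ^2) * rsum n (fun i => g i ^2).
Proof.
  set (A := rsum n (fun i => g i ^2)). set (B := rsum n (fun i => f i * g i)).
  set (C := rsum n (fun i => f i ^2)).
  assert (HA : 0 <= A) by apply sumsq_nonneg.
  assert (H : forall t, 0 <= C + 2 * t * B + t^2 * A).
  { intros t. replace (C + 2*t*B + t^2*A) with (rsum n (fun i => (f i + t * g i)^2)).
    apply sumsq_nonneg. unfold A, B, C. rewrite <- !rsum_scal, <- !rsum_plus.
    apply rsum_ext; intros; ring. }
  destruct (Req_dec A 0) as [H0|H0].
  - destruct (Req_dec B 0) as [HB|HB]. rewrite HB, H0; simpl; lra.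
    exfalso. specialize (H (-(C+1)/(2*B))). rewrite H0 in H.
    replace (C + 2 * (- (C + 1) / (2 * B)) * B + (- (C + 1) / (2 * B)) ^ 2 * 0) with (-1) in H by (field; auto). lra.
  - specialize (H (-B/A)).
    replace (C + 2 * (- B / A) * B + (- B / A) ^ 2 * A) with (C - B^2/A) in H by (field; auto).
    assert (0 < A) by lra.
    assert (B^2/A <= C) by lra.
    apply Rmult_le_compat_r with (r:=A) in H2; [|lra].
    replace (B^2/A*A) with (B^2) in H2 by (field; lra). lra.
Qed.

Lemma CS2 n f g : rsum n (fun i => f i * g i) <= norm2 n f * norm2 n g.
Proof. apply sq_le. apply Rmult_le_pos; apply norm2_nonneg.
  rewrite Rpow_mult_distr, !norm2_sq. apply CS. Qed.

Lemma mink n f g : norm2 n (fun i => f i + g i) <= norm2 n f + norm2 n g.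
Proof. apply sq_le. pose proof (norm2_nonneg n f); pose proof (norm2_nonneg n g); lra.
  rewrite norm2_sq.
  replace (rsum n (fun i => (f i + g i)^2)) with
    (rsum n (fun i => f i^2) + 2 * rsum n (fun i => f i * g i) + rsum n (fun i => g i ^2)).
  rewrite <- !norm2_sq. pose proof (CS2 n f g). nra.
  rewrite <- rsum_scal, <- !rsum_plus. apply rsum_ext; intros; ring. Qed.

Lemma norm2_opp n f : norm2 n (fun i => - f i) = norm2 n f.
Proof. unfold norm2; f_equal; apply rsum_ext; intros; ring. Qed.

Lemma mink_minus n f g : norm2 n (fun i => f i - g i) <= norm2 n f + norm2 n g.
Proof. rewrite <- (norm2_opp n g). apply (mink n f (fun i => - g i)). Qed.

Lemma norm1_le n u : norm1 n u <= sqrt (INR n) * norm2 n u.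
Proof. unfold norm1. replace (rsum n (fun i => Rabs (u i))) with (rsum n (fun i => Rabs (u i) * 1))
  by (apply rsum_ext; intros; ring).
  rewrite Rmult_comm. replace (norm2 n u) with (norm2 n (fun i => Rabs (u i))).
  replace (sqrt (INR n)) with (norm2 n (fun _ => 1)). apply CS2.
  unfold norm2; f_equal. rewrite <- rsum_const1. apply rsum_ext; intros; ring.
  unfold norm2; f_equal. apply rsum_ext; intros. apply pow2_abs. Qed.

Lemma norm2_zero_comp n u : norm2 n u = 0 -> forall i, (i<n)%nat -> u i = 0.
Proof. intros H i Hi. assert (rsum n (fun i => u i ^2) = 0).
  rewrite <- norm2_sq, H; simpl; ring.
  assert (u i ^2 = 0). apply (rsum_eq0 n (fun i => u i ^2)); auto; [intros; apply pow2_ge_0 | lra].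
  nra. Qed.

Lemma norm1_zero_comp n u : norm1 n u <= 0 -> forall i, (i<n)%nat -> u i = 0.
Proof. intros H i Hi. assert (Rabs (u i) = 0).
  apply (rsum_eq0 n (fun i => Rabs (u i))); auto; intros; apply Rabs_pos.
  destruct (Req_dec (u i) 0) as [E|E]; auto. pose proof (Rabs_no_R0 _ E). lra. Qed.
Definition e0 : nat -> R := fun i => if Nat.eqb i 0 then 1 else 0.
Definition nz (n:nat) (u : nat -> R) : nat -> R :=
  if Req_dec_T (norm2 n u) 0 then e0 else (fun i => u i / norm2 n u).

Lemma e0_sq n : rsum (S n) (fun i => e0 i ^2) = 1.
Proof. induction n. simpl. unfold e0; simpl; ring. cbn [rsum] in *. rewrite IHn. unfold e0; simpl; ring. Qed.
Lemma e0_abs n : rsum (S n) (fun i => Rabs (e0 i)) = 1.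
Proof. induction n. simpl. unfold e0; simpl. rewrite Rabs_R1; ring. cbn [rsum] in *. rewrite IHn. unfold e0; simpl. rewrite Rabs_R0; ring. Qed.

Lemma nz_norm2 n u : (1<=n)%nat -> norm2 n (nz n u) = 1.
Proof. intros Hn. unfold nz. destruct (Req_dec_T (norm2 n u) 0) as [E|E].
  - destruct n; [lia|]. unfold norm2. rewrite e0_sq, sqrt_1; auto.
  - pose proof (norm2_nonneg n u). assert (0 < norm2 n u) by lra.
    apply Rle_antisym; apply sq_le; try lra; try (apply norm2_nonneg).
    all: rewrite norm2_sq; replace (rsum n (fun i => (u i / norm2 n u) ^ 2)) with (rsum n (fun i => u i ^2) / norm2 n u ^2) by (unfold Rdiv; rewrite Rmult_comm, <- rsum_scal; apply rsum_ext; intros; field; lra);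
    rewrite <- norm2_sq; right; field; lra.
Qed.

Lemma nz_decomp n u i : (i<n)%nat -> u i = norm2 n u * nz n u i.
Proof. intros Hi. unfold nz. destruct (Req_dec_T (norm2 n u) 0) as [E|E].
  rewrite E, (norm2_zero_comp n u E i Hi). ring. field; auto. Qed.

Lemma nz_norm1_le n u s2 : 1 <= s2 -> (1<=n)%nat -> norm1 n u <= sqrt s2 * norm2 n u -> norm1 n (nz n u) <= sqrt s2.
Proof. intros Hs Hn H. unfold nz. destruct (Req_dec_T (norm2 n u) 0) as [E|E].
  - destruct n; [lia|]. unfold norm1. rewrite e0_abs. rewrite <- sqrt_1. apply sqrt_le_1_alt; auto.
  - pose proof (norm2_nonneg n u). assert (0 < norm2 n u) by lra.
    unfold norm1 in *. replace (rsum n (fun i => Rabs (u i / norm2 n u))) with (/ norm2 n u * rsum n (fun i => Rabs (u i))).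
    apply Rmult_le_reg_l with (norm2 n u); auto. rewrite <- Rmult_assoc, Rinv_r by lra. lra.
    rewrite <- rsum_scal. apply rsum_ext; intros. unfold Rdiv. rewrite Rabs_mult, Rabs_inv, (Rabs_pos_eq (norm2 n u)) by lra. ring.
Qed.

Lemma mk_inKR n1 n2 K Gam s2 (P Q : nat -> nat -> R) :
  (1 <= n1)%nat -> (1 <= n2)%nat -> 1 <= s2 ->
  (forall r, (r<K)%nat -> norm1 n2 (Q r) <= sqrt s2 * norm2 n2 (Q r)) ->
  norm2 K (fun r => norm2 n1 (P r) * norm2 n2 (Q r)) <= Gam ->
  inKR n1 n2 K Gam (INR n1) s2 (sum_outer K P Q).
Proof.
  intros H1 H2 Hs HQ HG.
  exists (fun r => norm2 n1 (P r) * norm2 n2 (Q r)), (fun r => nz n1 (P r)), (fun r => nz n2 (Q r)).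
  split; [|split; auto].
  - intros r Hr. unfold inK. rewrite !nz_norm2 by auto. repeat split; try lra.
    + pose proof (norm1_le n1 (nz n1 (P r))). rewrite nz_norm2 in H; auto. lra.
    + apply nz_norm1_le; auto.
  - intros i j Hi Hj. unfold sum_outer, wsum_outer. apply rsum_ext. intros r Hr.
    rewrite (nz_decomp n1 (P r) i Hi) at 1. rewrite (nz_decomp n2 (Q r) j Hj) at 1. ring.
Qed.

Lemma rip_use m n1 n2 a K s1 s2 Gam delta Z :
  0 < delta -> sparse_RIP m n1 n2 a K s1 s2 Gam delta -> inKR n1 n2 K Gam s1 s2 Z ->
  frob n1 n2 Z <= norm2 m (applyA n1 n2 a Z) + sqrt delta /\
  norm2 m (applyA n1 n2 a Z) <= frob n1 n2 Z + sqrt delta.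
Proof.
  intros Hd HR HZ. specialize (HR Z HZ). pose proof (Rle_abs (norm2 m (applyA n1 n2 a Z) ^ 2 - frob n1 n2 Z ^ 2)). pose proof (Rabs_Ropp (norm2 m (applyA n1 n2 a Z) ^ 2 - frob n1 n2 Z ^ 2)). pose proof (Rle_abs (-(norm2 m (applyA n1 n2 a Z) ^ 2 - frob n1 n2 Z ^ 2))).
  set (A := norm2 m (applyA n1 n2 a Z)) in *. set (F := frob n1 n2 Z) in *.
  assert (0 <= A) by apply norm2_nonneg. assert (0 <= F) by apply sqrt_pos.
  pose proof (sqrt_pos delta). pose proof (pow2_sqrt delta ltac:(lra)).
  split; apply sq_le; nra.
Qed.

Lemma applyA_ext n1 n2 a Z W k : mat_eq n1 n2 Z W -> applyA n1 n2 a Z k = applyA n1 n2 a W k.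
Proof. intros H. unfold applyA. apply rsum_ext; intros i Hi. apply rsum_ext; intros j Hj. rewrite H; auto. Qed.
Lemma frob_ext n1 n2 Z W : mat_eq n1 n2 Z W -> frob n1 n2 Z = frob n1 n2 W.
Proof. intros H. unfold frob. f_equal. apply rsum_ext; intros i Hi. apply rsum_ext; intros j Hj. rewrite H; auto. Qed.
Lemma applyA_sub n1 n2 a Z W k : applyA n1 n2 a (mat_sub Z W) k = applyA n1 n2 a Z k - applyA n1 n2 a W k.
Proof. unfold applyA, mat_sub. rewrite <- rsum_minus. apply rsum_ext; intros.
  rewrite <- rsum_minus. apply rsum_ext; intros. ring. Qed.

Lemma rpow_nonneg x p : 0 <= rpow x p.
Proof. unfold rpow. destruct (Rle_dec x 0); [lra|]. unfold Rpower. left; apply exp_pos. Qed.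
Lemma rpow_pos x p : 0 < x -> 0 < rpow x p.
Proof. intros. unfold rpow. destruct (Rle_dec x 0); [lra|]. apply exp_pos. Qed.
Lemma rpow_le0 x p : x <= 0 -> rpow x p = 0.
Proof. intros. unfold rpow. destruct (Rle_dec x 0); [auto|lra]. Qed.
Lemma rpow_mono x y p : 0 <= p -> 0 <= x <= y -> rpow x p <= rpow y p.
Proof. intros Hp Hxy. destruct (Rle_dec x 0). rewrite rpow_le0 by auto. apply rpow_nonneg.
  unfold rpow. destruct (Rle_dec x 0); [lra|]. destruct (Rle_dec y 0); [lra|].
  apply Rle_Rpower_l; lra. Qed.
Lemma rpow_sqrt_mul s x : 0 < s -> 0 <= x -> rpow (sqrt s * x) (2/3) = rpow s (1/3) * rpow x (2/3).
Proof. intros Hs Hx. destruct (Req_dec x 0). subst. rewrite Rmult_0_r, !(rpow_le0 0) by lra. ring.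
  assert (0 < sqrt s) by (apply sqrt_lt_R0; auto).
  unfold rpow. destruct (Rle_dec (sqrt s * x) 0). nra. destruct (Rle_dec s 0); [lra|]. destruct (Rle_dec x 0); [lra|].
  rewrite <- Rpower_mult_distr by lra. f_equal. rewrite <- Rpower_sqrt by auto. rewrite Rpower_mult. f_equal. field. Qed.

Definition tsc (a b : R) := exp ((ln b - 2 * ln a) / 3).
Lemma key_balance a b : 0 < a -> 0 < b -> a^2 * tsc a b ^2 + b / tsc a b = 2 * rpow (a*b) (2/3).
Proof. intros Ha Hb. unfold rpow. destruct (Rle_dec (a*b) 0). nra. unfold Rpower, tsc.
  rewrite ln_mult by auto.
  rewrite <- (exp_ln a) at 1 by auto. rewrite <- (exp_ln b) at 2 by auto.
  set (la := ln a). set (lb := ln b).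
  replace (exp la ^ 2 * exp ((lb - 2 * la) / 3) ^ 2) with (exp (2/3 * (la + lb))).
  replace (exp lb / exp ((lb - 2 * la) / 3)) with (exp (2/3 * (la + lb))). ring.
  assert (E : exp lb = exp (2/3*(la+lb)) * exp ((lb-2*la)/3)) by (rewrite <- exp_plus; f_equal; field).
  rewrite E. field. apply Rgt_not_eq, exp_pos.
  simpl. rewrite !Rmult_1_r, <- !exp_plus. f_equal. field.
Qed.

Lemma inKR_ext n1 n2 K Gam s1 s2 Z W : mat_eq n1 n2 Z W -> inKR n1 n2 K Gam s1 s2 W -> inKR n1 n2 K Gam s1 s2 Z.
Proof. intros H HW; destruct HW as [sig [U0 [V0 [H1 [H2 H3]]]]]. exists sig, U0, V0. split; [exact H1|split; [exact H2|]].
  intros i j Hi Hj. rewrite H, H3; auto. Qed.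

Lemma rsum_split2 Rk h f g : (forall r, (r<Rk)%nat -> h r = f r /\ h (Rk+r)%nat = g r) -> rsum (2*Rk) h = rsum Rk f + rsum Rk g.
Proof. intros H. replace (2*Rk)%nat with (Rk+Rk)%nat by lia. rewrite rsum_app. f_equal; apply rsum_ext; intros; apply H; auto. Qed.

Lemma ltb_t r Rk : (r<Rk)%nat -> (r <? Rk)%nat = true.
Proof. intros; apply Nat.ltb_lt; auto. Qed.
Lemma ltb_f r Rk : ((Rk + r) <? Rk)%nat = false.
Proof. apply Nat.ltb_ge; lia. Qed.
Lemma sub_add r Rk : (Rk + r - Rk)%nat = r.
Proof. lia. Qed.

Lemma norm2_zerovec n : norm2 n (fun _ => 0) = 0.
Proof. unfold norm2. rewrite (rsum_ext n _ (fun _ => 0)) by (intros; simpl; ring). rewrite rsum_zero. apply sqrt_0. Qed.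
Lemma norm1_zerovec n : norm1 n (fun _ => 0) = 0.
Proof. unfold norm1. rewrite (rsum_ext n _ (fun _ => 0)) by (intros; apply Rabs_R0). apply rsum_zero. Qed.
Lemma rsum_opp n f : rsum n (fun i => - f i) = - rsum n f.
Proof. induction n; simpl; [ring|]. rewrite IHn; ring. Qed.
Lemma applyA_zero n1 n2 a k : applyA n1 n2 a (fun _ _ => 0) k = 0.
Proof. unfold applyA. rewrite (rsum_ext n1 _ (fun _ => 0)). apply rsum_zero.
  intros. rewrite (rsum_ext n2 _ (fun _ => 0)). apply rsum_zero. intros; ring. Qed.
Lemma norm2_scal_sq n t u : norm2 n (fun i => t * u i) ^2 = t^2 * norm2 n u ^2.
Proof. rewrite !norm2_sq, <- rsum_scal. apply rsum_ext; intros; ring. Qed.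
Lemma norm1_div n t v : 0 < t -> norm1 n (fun j => v j / t) = norm1 n v / t.
Proof. intros Ht. unfold norm1, Rdiv. rewrite Rmult_comm, <- rsum_scal. apply rsum_ext; intros.
  rewrite Rabs_mult, Rabs_inv, (Rabs_pos_eq t) by lra. ring. Qed.

Theorem mainTheorem7
  (m n1 n2 Rk : nat) (a : nat -> nat -> nat -> R)
  (Gam s gam c cU delta : R)
  (Uh Vh : nat -> nat -> R) (eta : nat -> R)
  (hR : (1 <= Rk)%nat) (hGam : 1 <= Gam)
  (hs1 : 1 <= s) (hs2 : s <= INR n2) (hgam : 0 < gam) (hc : 1 <= c)
  (hrank : has_rank n1 n2 (sum_outer Rk Uh Vh) Rk)
  (hsparse : forall r, (r < Rk)%nat ->
     norm1 n2 (Vh r) <= sqrt s * norm2 n2 (Vh r))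
  (hGamma : rsum Rk (fun r => norm2 n1 (Uh r) ^ 2 * norm2 n2 (Vh r) ^ 2) <= Gam ^ 2)
  (hcU : 0 < cU)
  (hcU2 : rsum Rk (fun r => rpow (norm2 n1 (Uh r) * norm2 n2 (Vh r)) (2/3))
          <= cU * rpow (INR Rk) (2/3) * schatten_pow (2/3) n1 n2 (sum_outer Rk Uh Vh))
  (heta : exists k, (k < m)%nat /\ eta k <> 0)
  (halpha : norm2 m eta ^ 2 / schatten_pow (2/3) n1 n2 (sum_outer Rk Uh Vh) < 1)
  (hdelta : 0 < delta < 1)
  (hRIP : sparse_RIP m n1 n2 a (2 * Rk) (INR n1)
     (Rmax s (gam ^ 2 * (schatten_pow (2/3) n1 n2 (sum_outer Rk Uh Vh)
                          / norm2 m eta ^ 2) ^ 2))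
     ((c + 1) * Gam) delta) :
  let Xh := sum_outer Rk Uh Vh in
  let alpha := norm2 m eta ^ 2 / schatten_pow (2/3) n1 n2 Xh in
  let y := fun k => applyA n1 n2 a Xh k + eta k in
  forall U V : nat -> nat -> R,
    (forall U' V', Jfun m n1 n2 a y alpha alpha Rk U V
                   <= Jfun m n1 n2 a y alpha alpha Rk U' V') ->
    norm2 Rk (fun r => norm2 n1 (U r) * norm2 n2 (V r)) <= c * Gam ->
    (forall r, (r < Rk)%nat ->
       norm2 n2 (V r) >= (frob n1 n2 Xh + norm2 m eta + sqrt delta) ^ 2 / gam) ->
    frob n1 n2 (mat_sub Xh (sum_outer Rk U V))
      <= (2 * sqrt (cU * rpow (INR Rk) (2/3) * rpow s (1/3)) + 2) * norm2 m eta
         + sqrt delta.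
Proof.
  intros Xh alpha y U V Hmin Hsig Hv.
  subst Xh alpha y.
  set (Xh := sum_outer Rk Uh Vh) in *.
  set (S := schatten_pow (2/3) n1 n2 Xh) in *.
  set (E := norm2 m eta) in *.
  set (F := frob n1 n2 Xh) in *.
  set (s2 := Rmax s (gam ^ 2 * (S / E ^ 2) ^ 2)) in *.
  set (alpha := E^2/S) in *.
  set (y := fun k => applyA n1 n2 a Xh k + eta k) in *.
  destruct hrank as [_ hrk].
  assert (Hn1 : (1 <= n1)%nat).
  { destruct n1; [|lia]. exfalso. assert (Rk <= 0)%nat; [|lia].
    apply (hrk 0%nat Uh Vh). intros i j Hi; lia. }
  assert (Hn2 : (1 <= n2)%nat).
  { destruct n2; [|lia]. exfalso. assert (Rk <= 0)%nat; [|lia].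
    apply (hrk 0%nat Uh Vh). intros i j Hi Hj; lia. }
  assert (HE : 0 < E).
  { destruct heta as [k [Hk Hk2]]. pose proof (norm2_nonneg m eta).
    destruct (Req_dec E 0) as [E0|E0]; [|fold E in H; lra].
    exfalso. apply Hk2. apply (norm2_zero_comp m eta E0 k Hk). }
  assert (HS : 0 < S).
  { destruct (Rlt_dec 0 S) as [h|h]; auto. exfalso. apply Rnot_lt_le in h.
    assert (Hsum : rsum Rk (fun r => rpow (norm2 n1 (Uh r) * norm2 n2 (Vh r)) (2/3)) <= 0).
    { assert (0 < cU * rpow (INR Rk) (2/3)). apply Rmult_lt_0_compat; auto. apply rpow_pos. apply lt_0_INR; lia. nra. }
    assert (Rk <= 0)%nat; [|lia]. apply (hrk 0%nat Uh Vh). intros i j Hi Hj.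
    unfold Xh, sum_outer. simpl. rewrite <- (rsum_zero Rk). apply rsum_ext. intros r Hr.
    assert (Hz := rsum_eq0 _ _ (fun r _ => rpow_nonneg _ _) Hsum r Hr). simpl in Hz.
    destruct (Rle_dec (norm2 n1 (Uh r) * norm2 n2 (Vh r)) 0) as [hp|hp].
    2: { pose proof (rpow_pos _ (2/3) (Rnot_le_lt _ _ hp)). lra. }
    pose proof (norm2_nonneg n1 (Uh r)); pose proof (norm2_nonneg n2 (Vh r)).
    destruct (Req_dec (norm2 n1 (Uh r)) 0) as [z|z].
    rewrite (norm2_zero_comp _ _ z i Hi); ring.
    assert (z2 : norm2 n2 (Vh r) = 0) by nra. rewrite (norm2_zero_comp _ _ z2 j Hj); ring. }
  assert (Hal : 0 < alpha) by (unfold alpha; apply Rdiv_lt_0_compat; [nra|auto]).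
  assert (Hs2 : 1 <= s2) by (unfold s2; pose proof (Rmax_l s (gam ^ 2 * (S / E ^ 2) ^ 2)); lra).
  pose proof (sqrt_pos delta) as Hsd.
  assert (H1 : norm2 m (applyA n1 n2 a Xh) <= F + sqrt delta).
  { set (P := fun r => if (r <? Rk)%nat then Uh r else (fun _ : nat => 0)).
    set (Qv := fun r => if (r <? Rk)%nat then Vh r else (fun _ : nat => 0)).
    assert (Hin : inKR n1 n2 (2*Rk) ((c+1)*Gam) (INR n1) s2 Xh).
    { apply inKR_ext with (sum_outer (2*Rk) P Qv).
      - intros i j Hi Hj. unfold Xh, sum_outer.
        rewrite (rsum_split2 Rk _ (fun r => Uh r i * Vh r j) (fun _ => 0)). rewrite rsum_zero; ring.
        intros r Hr. unfold P, Qv. rewrite ltb_t, ltb_f by auto. split; cbn; ring.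
      - apply mk_inKR; auto.
        + intros r Hr. unfold Qv. destruct (r <? Rk)%nat eqn:Eb.
          * apply Nat.ltb_lt in Eb. eapply Rle_trans; [apply hsparse; auto|].
            apply Rmult_le_compat_r; [apply norm2_nonneg|]. apply sqrt_le_1_alt. unfold s2; apply Rmax_l.
          * rewrite norm1_zerovec, norm2_zerovec; lra.
        + apply sq_le. nra.
          rewrite norm2_sq. rewrite (rsum_split2 Rk _ (fun r => norm2 n1 (Uh r) ^ 2 * norm2 n2 (Vh r) ^ 2) (fun _ => 0)).
          rewrite rsum_zero. nra.
          intros r Hr. unfold P, Qv. rewrite ltb_t, ltb_f by auto. cbn. rewrite norm2_zerovec. split; ring. }
    apply (rip_use _ _ _ _ _ _ _ _ _ _ (proj1 hdelta) hRIP Hin). }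
  set (M := (F + E + sqrt delta)^2) in *.
  assert (H2 : Jfun m n1 n2 a y alpha alpha Rk U V <= M).
  { assert (Hy : norm2 m y <= F + E + sqrt delta).
    { eapply Rle_trans; [apply (mink m (applyA n1 n2 a Xh) eta)|]. fold E. lra. }
    eapply Rle_trans; [apply (Hmin (fun _ _ => 0) (fun _ _ => 0))|].
    unfold Jfun.
    rewrite (rsum_ext Rk _ (fun _ => 0)) by (intros; rewrite norm2_zerovec; ring).
    rewrite (rsum_ext Rk (fun r => norm1 n2 _) (fun _ => 0)) by (intros; rewrite norm1_zerovec; ring).
    rewrite rsum_zero.
    rewrite (norm2_ext m _ y).
    pose proof (norm2_nonneg m y). unfold M. nra.
    intros k Hk. rewrite (applyA_ext n1 n2 a _ (fun _ _ => 0)), applyA_zero. ring.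
    intros i j _ _. unfold sum_outer. transitivity (rsum Rk (fun _ => 0)); [apply rsum_ext; intros; ring| apply rsum_zero]. }
  assert (H3 : forall r, (r<Rk)%nat -> norm1 n2 (V r) <= sqrt s2 * norm2 n2 (V r)).
  { intros r Hr.
    assert (Hg : gam * S / E^2 <= sqrt s2).
    { rewrite <- (sqrt_pow2 (gam*S/E^2)) by (apply Rlt_le; apply Rdiv_lt_0_compat; nra).
      apply sqrt_le_1_alt. unfold s2. eapply Rle_trans; [|apply Rmax_r]. right. field. lra. }
    assert (Hag : alpha * (gam*S/E^2) = gam) by (unfold alpha; field; split; lra).
    assert (HJ : alpha * norm1 n2 (V r) <= M).
    { eapply Rle_trans; [|apply H2]. unfold Jfun.
      pose proof (rsum_term_le Rk (fun r => norm1 n2 (V r)) r (fun i _ => norm1_nonneg n2 (V i)) Hr).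
      pose proof (rsum_nonneg Rk (fun r => norm2 n1 (U r) ^2) (fun i _ => pow2_ge_0 _)).
      pose proof (pow2_ge_0 (norm2 m (fun k : nat => y k - applyA n1 n2 a (sum_outer Rk U V) k))).
      simpl in H. nra. }
    specialize (Hv r Hr).
    assert (gam * norm2 n2 (V r) >= M).
    { apply Rle_ge. apply Rmult_le_reg_r with (/ gam). apply Rinv_0_lt_compat; auto.
      replace (gam * norm2 n2 (V r) * / gam) with (norm2 n2 (V r)) by (field; lra). lra. }
    pose proof (norm2_nonneg n2 (V r)).
    apply Rmult_le_reg_l with alpha; auto.
    assert (alpha * (sqrt s2 * norm2 n2 (V r)) >= gam * norm2 n2 (V r)).
    { apply Rle_ge. rewrite <- Hag.
      pose proof (Rmult_le_compat_r (norm2 n2 (V r)) _ _ H0 Hg) as H'.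
      apply (Rmult_le_compat_l alpha) in H'; [|lra]. rewrite <- Rmult_assoc in H'. exact H'. }
    lra. }
  assert (H4 : frob n1 n2 (mat_sub Xh (sum_outer Rk U V)) <= norm2 m (applyA n1 n2 a (mat_sub Xh (sum_outer Rk U V))) + sqrt delta).
  { set (P := fun r => if (r <? Rk)%nat then Uh r else (fun i => - U (r - Rk)%nat i)).
    set (Qv := fun r => if (r <? Rk)%nat then Vh r else V (r - Rk)%nat).
    assert (Hin : inKR n1 n2 (2*Rk) ((c+1)*Gam) (INR n1) s2 (mat_sub Xh (sum_outer Rk U V))).
    { apply inKR_ext with (sum_outer (2*Rk) P Qv).
      - intros i j Hi Hj. unfold mat_sub, Xh, sum_outer.
        rewrite (rsum_split2 Rk _ (fun r => Uh r i * Vh r j) (fun r => - (U r i * V r j))). rewrite rsum_opp; ring.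
        intros r Hr. unfold P, Qv. rewrite ltb_t, ltb_f, sub_add by auto. split; cbn; ring.
      - apply mk_inKR; auto.
        + intros r Hr. unfold Qv. destruct (r <? Rk)%nat eqn:Eb.
          * apply Nat.ltb_lt in Eb. eapply Rle_trans; [apply hsparse; auto|].
            apply Rmult_le_compat_r; [apply norm2_nonneg|]. apply sqrt_le_1_alt. unfold s2; apply Rmax_l.
          * apply Nat.ltb_ge in Eb. apply H3. lia.
        + apply sq_le. nra.
          rewrite norm2_sq. rewrite (rsum_split2 Rk _ (fun r => norm2 n1 (Uh r) ^ 2 * norm2 n2 (Vh r) ^ 2) (fun r => (norm2 n1 (U r) * norm2 n2 (V r))^2)).
          * assert (Hs : norm2 Rk (fun r => norm2 n1 (U r) * norm2 n2 (V r)) ^2 <= (c*Gam)^2) by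
              (pose proof (norm2_nonneg Rk (fun r => norm2 n1 (U r) * norm2 n2 (V r))); nra).
            rewrite norm2_sq in Hs. nra.
          * intros r Hr. unfold P, Qv. rewrite ltb_t, ltb_f, sub_add by auto. cbn. rewrite norm2_opp. split; ring. }
    apply (rip_use _ _ _ _ _ _ _ _ _ _ (proj1 hdelta) hRIP Hin). }
  set (r0 := fun k => y k - applyA n1 n2 a (sum_outer Rk U V) k).
  assert (H5 : norm2 m (applyA n1 n2 a (mat_sub Xh (sum_outer Rk U V))) <= norm2 m r0 + E).
  { rewrite (norm2_ext m _ (fun k => r0 k - eta k)). apply mink_minus.
    intros k Hk. rewrite applyA_sub. unfold r0, y. ring. }
  set (Q := cU * rpow (INR Rk) (2/3) * rpow s (1/3)).
  assert (H6 : norm2 m r0 ^2 <= E^2 * (1 + 2 * Q)).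
  { set (U' := fun r => if Rlt_dec 0 (norm2 n1 (Uh r) * norm1 n2 (Vh r))
        then (fun i => tsc (norm2 n1 (Uh r)) (norm1 n2 (Vh r)) * Uh r i) else (fun _ : nat => 0)).
    set (V' := fun r => if Rlt_dec 0 (norm2 n1 (Uh r) * norm1 n2 (Vh r))
        then (fun j => Vh r j / tsc (norm2 n1 (Uh r)) (norm1 n2 (Vh r))) else (fun _ : nat => 0)).
    assert (HA : mat_eq n1 n2 (sum_outer Rk U' V') Xh).
    { intros i j Hi Hj. unfold Xh, sum_outer. apply rsum_ext. intros r Hr. unfold U', V'.
      pose proof (norm2_nonneg n1 (Uh r)); pose proof (norm1_nonneg n2 (Vh r)).
      destruct (Rlt_dec 0 (norm2 n1 (Uh r) * norm1 n2 (Vh r))) as [hp|hp]; cbv beta.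
      - pose proof (exp_pos ((ln (norm1 n2 (Vh r)) - 2 * ln (norm2 n1 (Uh r))) / 3)). unfold tsc. field. lra.
      - destruct (Req_dec (norm2 n1 (Uh r)) 0) as [z|z].
        + rewrite (norm2_zero_comp _ _ z i Hi); ring.
        + assert (z2 : norm1 n2 (Vh r) <= 0) by nra. rewrite (norm1_zero_comp _ _ z2 j Hj); ring. }
    assert (HB : forall r, (r < Rk)%nat -> norm2 n1 (U' r) ^2 + norm1 n2 (V' r) <=
       2 * rpow s (1/3) * rpow (norm2 n1 (Uh r) * norm2 n2 (Vh r)) (2/3)).
    { intros r Hr. unfold U', V'.
      pose proof (norm2_nonneg n1 (Uh r)); pose proof (norm1_nonneg n2 (Vh r)); pose proof (norm2_nonneg n2 (Vh r)).
      pose proof (rpow_nonneg s (1/3)). pose proof (rpow_nonneg (norm2 n1 (Uh r) * norm2 n2 (Vh r)) (2/3)).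
      destruct (Rlt_dec 0 (norm2 n1 (Uh r) * norm1 n2 (Vh r))) as [hp|hp].
      - assert (ha : 0 < norm2 n1 (Uh r)) by (destruct (Req_dec (norm2 n1 (Uh r)) 0); nra).
        assert (hb : 0 < norm1 n2 (Vh r)) by (destruct (Req_dec (norm1 n2 (Vh r)) 0); nra).
        rewrite norm2_scal_sq, norm1_div by apply exp_pos.
        replace (tsc (norm2 n1 (Uh r)) (norm1 n2 (Vh r)) ^ 2 * norm2 n1 (Uh r) ^ 2) with
          (norm2 n1 (Uh r) ^2 * tsc (norm2 n1 (Uh r)) (norm1 n2 (Vh r)) ^ 2) by ring.
        rewrite key_balance by auto.
        rewrite Rmult_assoc. apply Rmult_le_compat_l; [lra|].
        rewrite <- rpow_sqrt_mul by nra.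
        apply rpow_mono; [lra|]. split; [nra|].
        pose proof (hsparse r Hr).
        apply (Rmult_le_compat_l (norm2 n1 (Uh r))) in H4; [|lra]. nra.
      - rewrite norm2_zerovec, norm1_zerovec. nra. }
    assert (HJ' : Jfun m n1 n2 a y alpha alpha Rk U' V' <= E^2 * (1 + 2*Q)).
    { unfold Jfun.
      rewrite (norm2_ext m _ eta) by (intros k Hk; unfold y; rewrite (applyA_ext _ _ _ _ _ k HA); ring).
      fold E.
      assert (Hsum : rsum Rk (fun r => norm2 n1 (U' r) ^2) + rsum Rk (fun r => norm1 n2 (V' r))
                <= 2 * rpow s (1/3) * (cU * rpow (INR Rk) (2/3) * S)).
      { rewrite <- rsum_plus. eapply Rle_trans. apply rsum_le. exact HB.
        rewrite rsum_scal. pose proof (rpow_nonneg s (1/3)).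
        apply Rmult_le_compat_l; [lra|]. exact hcU2. }
      assert (HaS : alpha * S = E^2) by (unfold alpha; field; lra).
      apply (Rmult_le_compat_l alpha) in Hsum; [|lra].
      replace (alpha * (2 * rpow s (1 / 3) * (cU * rpow (INR Rk) (2 / 3) * S))) with
        (2 * Q * (alpha * S)) in Hsum by (unfold Q; ring).
      rewrite HaS in Hsum. nra. }
    pose proof (Hmin U' V').
    assert (norm2 m r0 ^2 <= Jfun m n1 n2 a y alpha alpha Rk U V).
    { unfold Jfun.
      pose proof (rsum_nonneg Rk (fun r => norm2 n1 (U r) ^2) (fun i _ => pow2_ge_0 _)).
      pose proof (rsum_nonneg Rk (fun r => norm1 n2 (V r)) (fun i _ => norm1_nonneg _ _)).
      unfold r0. nra. }
    lra. }
  assert (HQ : 0 <= Q) by (unfold Q; pose proof (rpow_nonneg (INR Rk) (2/3)); pose proof (rpow_nonneg s (1/3)); 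
     apply Rmult_le_pos; [apply Rmult_le_pos|]; lra).
  pose proof (sqrt_pos Q). pose proof (pow2_sqrt Q HQ).
  assert (norm2 m r0 <= E * (1 + 2 * sqrt Q)).
  { apply sq_le. nra. pose proof (norm2_nonneg m r0). nra. }
  lra.
Qed.
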